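(* Let $\mathcal M$ satisfy Assumptions (A) and (RE). If a predictor $h(X,S)$ is counterfactually fair, then it satisfies statistical parity, i.e. $h(X,S)$ is independent of $S$. The converse does not hold in general: there exist an SCM satisfying (A) and (RE) and a predictor satisfying statistical parity that is not counterfactually fair.
   Context: Setting: a structural causal model $\mathcal M$ (exogenous random vector $U$, possibly with dependent components; structural equations $V_i=G_i(V_{\mathrm{Endo}(i)},U_{\mathrm{Exo}(i)})$ with measurable $G_i$) whose a.s. unique solution is $(X,S)$ with $X$ valued in $\mathcal X\subseteq\mathbb R^d$ and $S$ valued in a finite $\mathcal S\subset\mathbb R$ with $\mathbb P(S=s)>0$ for all $s$. Assumption (A): the causal graph (edge $k\to l$ iff $k$ is an endogenous or exogenous parent of $l$) is acyclic. $U_X,U_S$ denote the exogenous parents of $X$ and of $S$. For $s\in\mathcal S$, $X_{S=s}$ is the $X$-component of the solution of the model where the equation of $S$ is replaced by $S=s$, all else (including $U$) unchanged. $\mu_s:=\mathcal L(X\mid S=s)$, $\mathcal X_s:=\operatorname{supp}\mu_s$. Assumption (RE): $U_S$ is independent of $U_X$, and no component of $X$ is an endogenous parent of $S$. A predictor $\hat Y=h(X,S)$ with $h:\mathcal X\times\mathcal S\to\mathbb R$ measurable is counterfactually fair if for every $s,s'\in\mathcal S$ and $\mu_s$-almost every $x\in\mathcal X_s$, $\mathcal L(\hat Y_{S=s}\mid X=x,S=s)=\mathcal L(\hat Y_{S=s'}\mid X=x,S=s)$, where $\hat Y_{S=s}:=h(X_{S=s},s)$. *)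

(* Defs.v *)
From HB Require Import structures.
From mathcomp Require Import all_boot all_order all_algebra.
From mathcomp Require Import all_classical all_reals all_analysis.

Set Implicit Arguments.
Unset Strict Implicit.
Unset Printing Implicit Defensive.

Import Order.TTheory GRing.Theory Num.Theory.
Local Open Scope classical_set_scope.
Local Open Scope ring_scope.

(* Structural causal models with endogenous variables (X_1,...,X_d, S) and  *)
(* exogenous random vector U = (U_1,...,U_m), all real valued.              *)

Definition Xnode (d : nat) (i : 'I_d) : 'I_d.+1 := widen_ord (leqnSn d) i.
Definition Snode (d : nat) : 'I_d.+1 := ord_max.

(* G i is the structural function of node i; it takes the full endogenous   *)
(* vector and the full exogenous vector but only depends on the coordinates *)
(* in the (endogenous, resp. exogenous) parent sets Endo(i), Exo(i).        *)
Record SCM (R : realType) (d m : nat) := {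
  endo_par : 'I_d.+1 -> {set 'I_d.+1};
  exo_par  : 'I_d.+1 -> {set 'I_m};
  G : 'I_d.+1 -> (d.+1).-tuple R * m.-tuple R -> R;
  G_measurable : forall i, measurable_fun [set: (d.+1).-tuple R * m.-tuple R] (G i);
  G_local : forall i (v v' : (d.+1).-tuple R) (u u' : m.-tuple R),
    (forall k, k \in endo_par i -> tnth v k = tnth v' k) ->
    (forall j, j \in exo_par i -> tnth u j = tnth u' j) ->
    G i (v, u) = G i (v', u')
}.

Definition causal_edge R d m (M : SCM R d m) : rel ('I_d.+1 + 'I_m)%type :=
  fun k l => match l with
             | inl i => match k with
                        | inl k' => k' \in endo_par M i
                        | inr j => j \in exo_par M i
                        end
             | inr _ => false
             end.

Definition acyclic R d m (M : SCM R d m) : Prop :=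
  forall k l, causal_edge M k l -> ~~ connect (causal_edge M) l k.

Section Probabilistic.
Context {R : realType} {dO : measure_display} {O : measurableType dO}.
Variable P : probability O R.

Definition sigma_gen (F : set (O -> R)) : set (set O) :=
  <<s [set E | exists f B, F f /\ measurable B /\ E = f @^-1` B] >>.

Definition indep (F1 F2 : set (set O)) : Prop :=
  forall A B, F1 A -> F2 B -> P (A `&` B) = (P A * P B)%E.

Variables (d m : nat) (M : SCM R d m) (U : O -> m.-tuple R).

Definition Ucoords (J : set 'I_m) : set (O -> R) :=
  [set f | exists2 j, J j & f = (fun w => tnth (U w) j)].

Definition RE : Prop :=
  indep (sigma_gen (Ucoords [set j | j \in exo_par M (Snode d)]))
        (sigma_gen (Ucoords [set j | exists i : 'I_d, j \in exo_par M (Xnode i)]))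
  /\ (forall i : 'I_d, Xnode i \notin endo_par M (Snode d)).

Definition solves (V : O -> (d.+1).-tuple R) : Prop :=
  {ae P, forall w, forall i, tnth (V w) i = G M i (V w, U w)}.

Definition unique_solution (V : O -> (d.+1).-tuple R) : Prop :=
  [/\ measurable_fun [set: O] V, solves V &
      forall V' : O -> (d.+1).-tuple R,
        measurable_fun [set: O] V' -> solves V' -> {ae P, forall w, V' w = V w}].

Definition intervened_solution (s : R) (V : O -> (d.+1).-tuple R) : Prop :=
  measurable_fun [set: O] V /\
  {ae P, forall w, tnth (V w) (Snode d) = s /\
           forall i : 'I_d, tnth (V w) (Xnode i) = G M (Xnode i) (V w, U w)}.

Definition Xof (V : O -> (d.+1).-tuple R) (w : O) : d.-tuple R :=
  [tuple tnth (V w) (Xnode i) | i < d].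
Definition Sof (V : O -> (d.+1).-tuple R) (w : O) : R := tnth (V w) (Snode d).

Definition setting (V : O -> (d.+1).-tuple R) (Sset : seq R) : Prop :=
  [/\ measurable_fun [set: O] U, unique_solution V,
      (forall w, Sof V w \in Sset) &
      (forall s, s \in Sset -> (0 < P [set w | Sof V w = s])%E)].

(* K is a version of the conditional law L(Y | X = x, E), i.e. for all      *)
(* Borel A, B:  P(E, X in A, Y in B) = int_{E /\ X in A} K(X w)(B) dP(w)     *)
(* (equivalently, after dividing by P(E), the defining identity of a         *)
(* regular conditional distribution under P( . | E)).                        *)
Definition cond_law_version (Y : O -> R) (X : O -> d.-tuple R) (E : set O)
    (K : R.-pker (d.-tuple R) ~> R) : Prop :=
  forall (A : set (d.-tuple R)) (B : set R), measurable A -> measurable B ->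
    P (E `&` X @^-1` A `&` Y @^-1` B) = (\int[P]_(w in E `&` X @^-1` A) K (X w) B)%E.

Definition cond_X_law (V : O -> (d.+1).-tuple R) (s : R) : set (d.-tuple R) -> \bar R :=
  fun A => (P ([set w | Sof V w = s] `&` Xof V @^-1` A)
            * ((fine (P [set w | Sof V w = s]))^-1)%:E)%E.

Definition Yhat_do (Vint : R -> O -> (d.+1).-tuple R) (h : d.-tuple R * R -> R)
    (s : R) (w : O) : R := h (Xof (Vint s) w, s).

Definition counterfactually_fair (V : O -> (d.+1).-tuple R)
    (Vint : R -> O -> (d.+1).-tuple R) (Sset : seq R)
    (h : d.-tuple R * R -> R) : Prop :=
  forall s s', s \in Sset -> s' \in Sset ->
    exists K K' : R.-pker (d.-tuple R) ~> R,
      [/\ cond_law_version (Yhat_do Vint h s) (Xof V) [set w | Sof V w = s] K,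
          cond_law_version (Yhat_do Vint h s') (Xof V) [set w | Sof V w = s] K' &
          {ae cond_X_law V s, forall x, forall B, measurable B -> K x B = K' x B}].

Definition statistical_parity (V : O -> (d.+1).-tuple R)
    (h : d.-tuple R * R -> R) : Prop :=
  indep (sigma_gen [set fun w => h (Xof V w, Sof V w)])
        (sigma_gen [set Sof V]).

End Probabilistic.

(* Main.v *)
Require Import Defs.
From HB Require Import structures.
From mathcomp Require Import all_boot all_order all_algebra.
From mathcomp Require Import all_classical all_reals all_analysis.
From mathcomp Require Import measurable_realfun.
From mathcomp Require Import ring lra.
Import Order.TTheory GRing.Theory Num.Theory.
Local Open Scope classical_set_scope.
Local Open Scope ring_scope.

Section Gen.
Context {R : realType} {dO : measure_display} {O : measurableType dO}.

Lemma sigma_gen1 (f : O -> R) E :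
  sigma_gen [set f] E -> exists2 B, measurable B & E = f @^-1` B.
Proof.
move=> HE.
have : preimage_set_system setT f measurable E.
  apply: (smallest_sub _ _ HE).
    exact/sigma_algebra_preimage/sigma_algebra_measurable.
  move=> _ [g [B [-> [mB ->]]]]; exists B => //; by rewrite setTI.
by case=> B mB <-; exists B => //; rewrite setTI.
Qed.

Lemma indep_single (P : probability O R) (f g : O -> R) :
  (forall B C, measurable B -> measurable C ->
     P (f @^-1` B `&` g @^-1` C) = (P (f @^-1` B) * P (g @^-1` C))%E) ->
  indep P (sigma_gen [set f]) (sigma_gen [set g]).
Proof.
move=> H A B /sigma_gen1 [B1 mB1 ->] /sigma_gen1 [C1 mC1 ->]; exact: H.
Qed.

Lemma gen_in (F : set (O -> R)) f B : F f -> measurable B -> sigma_gen F (f @^-1` B).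
Proof. by move=> Ff mB; apply: sub_sigma_algebra; exists f, B. Qed.

End Gen.

Section Gen2.
Context {R : realType} {dO : measure_display} {O : measurableType dO}.

Lemma mpre d1 (T1 : measurableType d1) d' (T : measurableType d') (f : T1 -> T) B :
  measurable_fun setT f -> measurable B -> measurable (f @^-1` B).
Proof. by move=> mf mB; rewrite -[f @^-1` B]setTI; exact: mf. Qed.

Lemma ae_set_eq (P : probability O R) (A A' : set O) :
  measurable A -> measurable A' -> {ae P, forall w, A w <-> A' w} -> P A = P A'.
Proof.
move=> mA mA' H; case: H => N [mN N0 HN].
have h0 : forall B, measurable B -> P (B `&` N) = 0%E.
  move=> B mB; apply/eqP; rewrite -measure_le0 -N0 le_measure ?inE //.
  exact: measurableI.
rewrite (measureDI P mA mN) (measureDI P mA' mN).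
rewrite [X in (_ + X = _)%E]h0 // [X in (_ = _ + X)%E]h0 // !adde0.
congr (P _); apply/seteqP; split => w [Aw nN]; split => //.
- by case: (pselect (A w <-> A' w)) => [[/(_ Aw)]//|h]; exfalso; exact/nN/HN.
- by case: (pselect (A w <-> A' w)) => [[_ /(_ Aw)]//|h]; exfalso; exact/nN/HN.
Qed.

Variable (m : nat) (U : O -> m.-tuple R).

Lemma sigma_gen_sa (F : set (O -> R)) : sigma_algebra setT (sigma_gen F).
Proof. exact: smallest_sigma_algebra. Qed.

Lemma coords_gen (J : set 'I_m) (D : set (m.-tuple R)) : measurable D ->
  sigma_gen (Ucoords U J)
    ((fun w => [tuple (if `[< J j >] then tnth (U w) j else 0) | j < m]) @^-1` D).
Proof.
set pi := (fun w => _).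
move=> mD.
have [s0 sC sU] := sigma_gen_sa (Ucoords U J).
have mD' : g_sigma_preimage (fun i (x : m.-tuple R) => tnth x i) D := mD.
apply: (@smallest_sub _ _ _ [set D | sigma_gen (Ucoords U J) (pi @^-1` D)] _ _ _ mD').
  split.
  - by rewrite /= (_ : pi @^-1` set0 = set0) //; apply/seteqP; split.
  - move=> A HA /=; rewrite (_ : pi @^-1` _ = [set: O] `\` pi @^-1` A); first exact: sC.
    by apply/seteqP; split => w /=.
  - move=> A HA /=; rewrite (_ : pi @^-1` _ = \bigcup_k (pi @^-1` A k)); first exact: sU.
    by apply/seteqP; split => w /=.
rewrite -bigcup_seq => A [i _ [Y mY <-]].
rewrite /= (_ : pi @^-1` _ = (fun w => if `[< J i >] then tnth (U w) i else 0) @^-1` Y); last first.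
  by apply/seteqP; split => w /=; rewrite /pi tnth_mktuple // => -[].
case: (pselect (J i)) => Ji.
  rewrite (asboolT Ji); apply: sub_sigma_algebra; exists (fun w => tnth (U w) i), Y.
  by split => //; exists i.
rewrite (asboolF Ji).
case: (pselect (Y 0)) => Y0.
  have -> : (fun _ : O => (0:R)) @^-1` Y = setT by apply/seteqP; split.
  by rewrite -setC0; apply: sigma_algebraC.
by have -> : (fun _ : O => (0:R)) @^-1` Y = set0 by apply/seteqP; split.
Qed.

Lemma local_gen (J : set 'I_m) d' (T : measurableType d') (g : m.-tuple R -> T) (C : set T) :
  measurable_fun setT g ->
  (forall u u', (forall j, J j -> tnth u j = tnth u' j) -> g u = g u') ->
  measurable C -> sigma_gen (Ucoords U J) ((fun w => g (U w)) @^-1` C).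
Proof.
move=> mg lg mC.
rewrite (_ : _ @^-1` C = (fun w => [tuple (if `[< J j >] then tnth (U w) j else 0) | j < m]) @^-1` (g @^-1` C)).
  by apply: coords_gen; apply: mpre.
apply/seteqP; split => w /=.
  by rewrite (lg (U w) [tuple (if `[< J j >] then tnth (U w) j else 0) | j < m]) // => j Jj; rewrite tnth_mktuple asboolT.
by rewrite (lg (U w) [tuple (if `[< J j >] then tnth (U w) j else 0) | j < m]) // => j Jj; rewrite tnth_mktuple asboolT.
Qed.
End Gen2.

Definition Phi {R : realType} {d m : nat} (M : SCM R d m) (s : R) (u : m.-tuple R)
  (v : (d.+1).-tuple R) : (d.+1).-tuple R :=
  [tuple (if i == Snode d then s else G M i (v, u)) | i < d.+1].
Definition Fsol {R : realType} {d m : nat} (M : SCM R d m) (s : R) (u : m.-tuple R) :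
  (d.+1).-tuple R :=
  iter #|{: ('I_d.+1 + 'I_m)%type}| (Phi M s u) [tuple (0:R) | i < d.+1].
Definition anc {R : realType} {d m : nat} (M : SCM R d m) (i : 'I_d.+1) : nat :=
  #|[pred k | connect (causal_edge M) k (inl i)]|.

Section Det.
Context {R : realType} {d m : nat} (M : SCM R d m).
Hypothesis ac : acyclic M.

Lemma anc_lt i j : j \in endo_par M i -> (anc M j < anc M i)%N.
Proof.
move=> ji; apply: proper_card; apply/properP; split.
  apply/fintype.subsetP => k; rewrite !inE => ckj; apply: connect_trans ckj (connect1 _).
  exact: ji.
exists (inl i); first by rewrite inE connect0.
by rewrite inE; exact: (ac (inl j) (inl i)).
Qed.

Lemma anc_gt0 i : (0 < anc M i)%N.
Proof. by apply/card_gt0P; exists (inl i); rewrite inE connect0. Qed.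

Lemma anc_le i : (anc M i <= #|{: ('I_d.+1 + 'I_m)%type}|)%N.
Proof. exact: max_card. Qed.

Lemma isX (i : 'I_d.+1) : i != Snode d -> exists j : 'I_d, i = Xnode j.
Proof.
move=> iS; have lt : (i < d)%N.
  have := ltn_ord i; rewrite ltnS leq_eqVlt => /orP [/eqP ei|//].
  by exfalso; move/eqP: iS; apply; apply: val_inj.
by exists (Ordinal lt); apply: val_inj.
Qed.

Lemma fix_unique s u (vs : (d.+1).-tuple R) :
  tnth vs (Snode d) = s ->
  (forall i : 'I_d, tnth vs (Xnode i) = G M (Xnode i) (vs, u)) ->
  Fsol M s u = vs.
Proof.
move=> hS hX.
have key : forall k i, (anc M i <= k)%N ->
    tnth (iter k (Phi M s u) [tuple (0:R) | i < d.+1]) i = tnth vs i.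
  elim=> [|k IH] i.
    by rewrite leqn0 => /eqP a0; move: (anc_gt0 i); rewrite a0.
  move=> ak; rewrite iterS /Phi tnth_mktuple.
  have [->|iS] := eqVneq i (Snode d); first by rewrite hS.
  have [j ij] := isX _ iS.
  rewrite ij hX -ij; apply: G_local => // k' k'i.
  apply: IH; rewrite -ltnS; exact: leq_trans (anc_lt _ _ k'i) ak.
apply: eq_from_tnth => i; apply: key; exact: anc_le.
Qed.

Lemma Fsol_local s u u' :
  (forall j, (exists i : 'I_d, j \in exo_par M (Xnode i)) -> tnth u j = tnth u' j) ->
  Fsol M s u = Fsol M s u'.
Proof.
move=> huu; rewrite /Fsol; elim: #|_| => [//|k IH]; rewrite !iterS IH.
apply: eq_from_tnth => i; rewrite /Phi !tnth_mktuple.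
have [//|iS] := eqVneq i (Snode d).
have [j ij] := isX _ iS.
apply: G_local => // j' j'i; apply: huu; exists j; by rewrite -ij.
Qed.

Lemma Fsol_meas s : measurable_fun setT (Fsol M s).
Proof.
rewrite /Fsol; elim: #|_| => [|k IH] /=; first exact: measurable_cst.
apply/measurable_fun_tnthP => i.
rewrite (_ : _ \o _ = (fun u => if i == Snode d then s else
    G M i (iter k (Phi M s u) [tuple (0:R) | i < d.+1], u))); last first.
  by apply/funext => u /=; rewrite /Phi tnth_mktuple.
case: (i == Snode d); first exact: measurable_cst.
apply: measurableT_comp; first exact: G_measurable.
exact: measurable_fun_pair.
Qed.
End Det.

Definition Xt {R : realType} {d : nat} (v : (d.+1).-tuple R) : d.-tuple R :=
  [tuple tnth v (Xnode i) | i < d].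

Lemma Xt_meas {R : realType} {d : nat} : measurable_fun setT (@Xt R d).
Proof.
apply/measurable_fun_tnthP => i.
rewrite (_ : _ \o _ = (fun v => tnth v (Xnode i))); first exact: measurable_tnth.
by apply/funext => v /=; rewrite tnth_mktuple.
Qed.

Section Main.
Context {R : realType} {d m : nat} {dO : measure_display} {O : measurableType dO}
  (P : probability O R) (M : SCM R d m) (U : O -> m.-tuple R)
  (V : O -> (d.+1).-tuple R) (Vint : R -> O -> (d.+1).-tuple R)
  (Sset : seq R) (h : d.-tuple R * R -> R).
Hypothesis ac : acyclic M.
Hypothesis hREi : indep P (sigma_gen (Ucoords U [set j | j \in exo_par M (Snode d)]))
        (sigma_gen (Ucoords U [set j | exists i : 'I_d, j \in exo_par M (Xnode i)])).
Hypothesis hREe : forall i : 'I_d, Xnode i \notin endo_par M (Snode d).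
Hypothesis mU : measurable_fun [set: O] U.
Hypothesis mV : measurable_fun [set: O] V.
Hypothesis solV : solves P M U V.
Hypothesis inS : forall w, Sof V w \in Sset.
Hypothesis posS : forall s, s \in Sset -> (0 < P [set w | Sof V w = s])%E.
Hypothesis hint : forall s, s \in Sset -> intervened_solution P M U s (Vint s).
Hypothesis mh : measurable_fun [set: d.-tuple R * R] h.
Hypothesis hCF : counterfactually_fair P V Vint Sset h.

Definition gS (u : m.-tuple R) : R := G M (Snode d) ([tuple (0:R) | _ < d.+1], u).

Lemma endoS k : k \notin endo_par M (Snode d).
Proof.
have [->|kS] := eqVneq k (Snode d).
  apply/negP => kk; have := ac (inl (Snode d)) (inl (Snode d)) kk.
  by rewrite connect0.
by have [j ->] := isX _ kS; exact: hREe.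
Qed.

Lemma GS_free v u : G M (Snode d) (v, u) = gS u.
Proof. by apply: G_local => // k; rewrite (negbTE (endoS k)). Qed.

Lemma gS_meas : measurable_fun setT gS.
Proof.
apply: measurableT_comp; first exact: G_measurable.
exact: measurable_fun_pair.
Qed.

Lemma mSof : measurable_fun setT (Sof V).
Proof. exact: measurableT_comp (measurable_tnth _) mV. Qed.

Lemma mXof (W : O -> (d.+1).-tuple R) : measurable_fun setT W -> measurable_fun setT (Xof W).
Proof. by move=> mW; exact: measurableT_comp Xt_meas mW. Qed.

Lemma a1 : {ae P, forall w, V w = Fsol M (Sof V w) (U w)}.
Proof.
apply: filterS solV => w hw; symmetry; apply: fix_unique => // i; exact: hw.
Qed.

Lemma a2 : {ae P, forall w, Sof V w = gS (U w)}.
Proof. by apply: filterS solV => w hw; rewrite /Sof hw GS_free. Qed.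

Lemma a3 s : s \in Sset -> {ae P, forall w, Vint s w = Fsol M s (U w)}.
Proof.
move=> /hint [_ hs]; apply: filterS hs => w [hS hX]; symmetry.
exact: fix_unique.
Qed.

Lemma mE s : measurable [set w | Sof V w = s].
Proof.
have -> : [set w | Sof V w = s] = Sof V @^-1` [set s] by [].
apply: mpre; [exact: mSof|exact: measurable_set1].
Qed.

Lemma mYh s : s \in Sset -> measurable_fun setT (Yhat_do Vint h s).
Proof.
case/hint => mVs _; rewrite /Yhat_do.
apply: (measurableT_comp (f := h) (g := fun w => (Xof (Vint s) w, s))); first exact: mh.
apply: measurable_fun_pair; first exact: mXof.
exact: measurable_cst.
Qed.

Lemma mHS : measurable_fun setT (fun w => h (Xof V w, Sof V w)).
Proof.
apply: (measurableT_comp (f := h) (g := fun w => (Xof V w, Sof V w))); first exact: mh.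
apply: measurable_fun_pair; first exact: mXof.
exact: mSof.
Qed.

Lemma stepA s B : s \in Sset -> measurable B ->
  P ([set w | Sof V w = s] `&` (fun w => h (Xof V w, Sof V w)) @^-1` B) =
  P ([set w | Sof V w = s] `&` Yhat_do Vint h s @^-1` B).
Proof.
move=> hs mB; apply: ae_set_eq.
- by apply: measurableI; [exact: mE|apply: mpre; [exact: mHS|exact: mB]].
- by apply: measurableI; [exact: mE|apply: mpre; [exact: mYh|exact: mB]].
apply: (filterS2 _ _ a1 (a3 s hs)) => w e1 e3.
split => -[Es Hw]; split => //; move: Hw; rewrite /= /Yhat_do /Xof.
  by rewrite e1 Es -e3.
by rewrite e1 Es -e3.
Qed.

Lemma stepB s s' B : s \in Sset -> s' \in Sset -> measurable B ->
  P ([set w | Sof V w = s] `&` Yhat_do Vint h s @^-1` B) =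
  P ([set w | Sof V w = s] `&` Yhat_do Vint h s' @^-1` B).
Proof.
move=> hs hs' mB.
case: (hCF s s' hs hs') => K [K' [H1 H2 Hae]].
case: Hae => N [mN N0 HN].
have mXN : measurable ([set w | Sof V w = s] `&` Xof V @^-1` N).
  by apply: measurableI; [exact: mE|apply: mpre; [exact: mXof|exact: mN]].
have PEN : P ([set w | Sof V w = s] `&` Xof V @^-1` N) = 0%E.
  move: N0; rewrite /cond_X_law => /eqP; rewrite mule_eq0 => /orP[/eqP //|].
  have hpos := posS s hs.
  have hlt : (P [set w | Sof V w = s] < +oo)%E.
    exact: le_lt_trans (probability_le1 _ (mE s)) (ltry _).
  have hf : (0 < fine (P [set w | Sof V w = s]))%R by apply: fine_gt0; rewrite hpos hlt.
  by rewrite eqe invr_eq0 (gt_eqF hf).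
have key : forall (Y : O -> R) (KK : R.-pker (d.-tuple R) ~> R),
    measurable_fun setT Y -> cond_law_version P Y (Xof V) [set w | Sof V w = s] KK ->
    P ([set w | Sof V w = s] `&` Y @^-1` B) =
    (\int[P]_(w in [set w | Sof V w = s] `&` Xof V @^-1` (~` N)) KK (Xof V w) B)%E.
  move=> Y KK mY HK; rewrite -HK; last by [].
    apply: ae_set_eq.
    - by apply: measurableI; [exact: mE|apply: mpre].
    - apply: measurableI; last by apply: mpre.
      by apply: measurableI; [exact: mE|apply: mpre; [exact: mXof|exact: measurableC]].
    exists ([set w | Sof V w = s] `&` Xof V @^-1` N); split => // w /= nQ.
    case: (pselect (N (Xof V w))) => nN.
      case: (pselect (Sof V w = s)) => Es; first by split.
      by exfalso; apply: nQ; split => [[Es' _]|[[Es' _] _]]; exfalso; apply: Es; exact: Es'.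
    by exfalso; apply: nQ; split => [[Es Yw]|[[Es _] Yw]].
  by apply: measurableC.
rewrite (key _ K (mYh s hs) H1) (key _ K' (mYh s' hs') H2).
apply: eq_integral => w; rewrite in_setE => -[_ /= nN].
case: (pselect (forall B0 : set R, measurable B0 -> K (Xof V w) B0 = K' (Xof V w) B0)) => [hh|hh].
  exact: hh.
by exfalso; apply: nN; apply: HN.
Qed.

Lemma stepC s s' B : s \in Sset -> s' \in Sset -> measurable B ->
  P ([set w | Sof V w = s] `&` Yhat_do Vint h s' @^-1` B) =
  (P [set w | Sof V w = s] * P (Yhat_do Vint h s' @^-1` B))%E.
Proof.
move=> hs hs' mB.
pose g' := fun u => h (Xt (Fsol M s' u), s').
have mg' : measurable_fun setT g'.
  apply: (measurableT_comp (f := h) (g := fun u => (Xt (Fsol M s' u), s'))); first exact: mh.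
  apply: measurable_fun_pair; last exact: measurable_cst.
  by apply: (measurableT_comp (f := Xt) (g := Fsol M s')); [exact: Xt_meas|exact: Fsol_meas].
have mgS' : measurable_fun setT (fun w => gS (U w)).
  by apply: (measurableT_comp (f := gS) (g := U)); [exact: gS_meas|exact: mU].
have mg'U : measurable_fun setT (fun w => g' (U w)).
  by apply: (measurableT_comp (f := g') (g := U)); [exact: mg'|exact: mU].
have hE' : sigma_gen (Ucoords U [set j | j \in exo_par M (Snode d)])
    ((fun w => gS (U w)) @^-1` [set s]).
  apply: local_gen => //; first exact: gS_meas.
  by move=> u u' huu; apply: G_local.
have hY' : sigma_gen (Ucoords U [set j | exists i : 'I_d, j \in exo_par M (Xnode i)])
    ((fun w => g' (U w)) @^-1` B).
  apply: local_gen => // u u' huu.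
  by rewrite /g' (Fsol_local M s' u u' huu).
have mE' : measurable ((fun w => gS (U w)) @^-1` [set s]).
  by apply: mpre; [exact: mgS'|exact: measurable_set1].
have mY' : measurable ((fun w => g' (U w)) @^-1` B) by apply: mpre.
have mYh' : measurable (Yhat_do Vint h s' @^-1` B) by apply: mpre; [exact: mYh|].
have eE : P [set w | Sof V w = s] = P ((fun w => gS (U w)) @^-1` [set s]).
  apply: ae_set_eq => //; first exact: mE.
  by apply: filterS a2 => w e2; rewrite /= e2.
have eY : P (Yhat_do Vint h s' @^-1` B) = P ((fun w => g' (U w)) @^-1` B).
  apply: ae_set_eq => //.
  by apply: filterS (a3 s' hs') => w e3; rewrite /= /Yhat_do /g' /Xof -/(Xt (Vint s' w)) e3.
rewrite eE eY -hREi //.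
apply: ae_set_eq.
- by apply: measurableI; [exact: mE|].
- exact: measurableI.
apply: (filterS2 _ _ a2 (a3 s' hs')) => w e2 e3.
by rewrite /= /Yhat_do /g' /Xof -/(Xt (Vint s' w)) e3 e2.
Qed.

Lemma mL (l : seq R) : measurable [set w | Sof V w \in l].
Proof.
elim: l => [|x l IH].
  by rewrite (_ : [set w | _] = set0) //; apply/seteqP; split => w //=; rewrite in_nil.
rewrite (_ : [set w | _] = [set w | Sof V w = x] `|` [set w | Sof V w \in l]).
  exact: measurableU (mE x) IH.
apply/seteqP; split => w /=.
  by rewrite in_cons => /orP[/eqP ->|wl]; [left|right].
by case=> [->|wl]; rewrite in_cons ?eqxx ?wl ?orbT.
Qed.

Lemma sum_lemma B c : measurable B -> c \is a fin_num ->
  (forall s, s \in Sset ->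
     P ([set w | Sof V w = s] `&` (fun w => h (Xof V w, Sof V w)) @^-1` B) =
     (P [set w | Sof V w = s] * c)%E) ->
  forall l, uniq l -> {subset l <= Sset} ->
  P ((fun w => h (Xof V w, Sof V w)) @^-1` B `&` [set w | Sof V w \in l]) =
  (P [set w | Sof V w \in l] * c)%E.
Proof.
move=> mB fc hyp; elim=> [|x l IH] /=.
  move=> _ _; rewrite (_ : [set w | _] = set0); last first.
    by apply/seteqP; split => w //=; rewrite in_nil.
  by rewrite setI0 measure0 mul0e.
move=> /andP[xl ul] sub.
have eq1 : [set w | Sof V w \in x :: l] = [set w | Sof V w = x] `|` [set w | Sof V w \in l].
  apply/seteqP; split => w /=.
  by rewrite in_cons => /orP[/eqP ->|wl]; [left|right].
by case=> [->|wl]; rewrite in_cons ?eqxx ?wl ?orbT.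
have disj : [set w | Sof V w = x] `&` [set w | Sof V w \in l] = set0.
  by apply/seteqP; split => w //= [-> xl']; rewrite xl' in xl.
have mHS' : measurable ((fun w => h (Xof V w, Sof V w)) @^-1` B) by apply: mpre; [exact: mHS|].
rewrite eq1 setIUr measureU; last first.
- apply/seteqP; split => w //= [[_ e] [_ el]]; have : w \in set0 by rewrite -disj; apply/mem_set.
  by rewrite in_set0.
- by apply: measurableI => //; exact: mL.
- by apply: measurableI => //; exact: mE.
rewrite [X in (_ + X)%E]IH //; last by move=> y yl; apply: sub; rewrite in_cons yl orbT.
rewrite [in X in (X + _)%E]setIC [X in (X + _)%E]hyp; last by apply: sub; rewrite in_cons eqxx.
rewrite [X in (_ = X * c)%E]measureU //; [|exact: mE|exact: mL].
by rewrite ge0_muleDl.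
Qed.

Lemma SP_main : statistical_parity P V h.
Proof.
have [w0 _] : exists w : O, True.
  case: (pselect (exists w : O, True)) => // nO; exfalso.
  have T0 : [set: O] = set0 by apply/seteqP; split => w // _; apply: nO; exists w.
  have := probability_setT P; rewrite T0 measure0 => -[] /eqP.
  by rewrite eq_sym oner_eq0.
have s0in := inS w0.
apply: indep_single => B C mB mC.
have mYB : measurable (Yhat_do Vint h (Sof V w0) @^-1` B) by apply: mpre; [exact: mYh|].
have fc : P (Yhat_do Vint h (Sof V w0) @^-1` B) \is a fin_num.
  rewrite ge0_fin_numE ?measure_ge0 //.
  exact: le_lt_trans (probability_le1 _ mYB) (ltry _).
have hyp : forall s, s \in Sset ->
    P ([set w | Sof V w = s] `&` (fun w => h (Xof V w, Sof V w)) @^-1` B) =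
    (P [set w | Sof V w = s] * P (Yhat_do Vint h (Sof V w0) @^-1` B))%E.
  by move=> s hs; rewrite stepA // (stepB s (Sof V w0)) // stepC.
have gen : forall C' : set R,
    P ((fun w => h (Xof V w, Sof V w)) @^-1` B `&` Sof V @^-1` C') =
    (P (Sof V @^-1` C') * P (Yhat_do Vint h (Sof V w0) @^-1` B))%E.
  move=> C'.
  have eqC : Sof V @^-1` C' = [set w | Sof V w \in [seq x <- undup Sset | `[< C' x >]]].
    apply/seteqP; split => w /=.
      by move=> Cw; rewrite mem_filter mem_undup inS andbT; apply/asboolP.
    by rewrite mem_filter => /andP[/asboolP].
  rewrite eqC; apply: sum_lemma => //.
  - by rewrite filter_uniq // undup_uniq.
  - by move=> x; rewrite mem_filter mem_undup => /andP[].
rewrite gen.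
have := gen setT; rewrite preimage_setT setIT probability_setT mul1e => ->.
by rewrite muleC.
Qed.
End Main.


Section Ex.
Variable R : realType.

Definition Gex (i : 'I_2) (p : 2.-tuple R * 2.-tuple R) : R :=
  if i == Snode 1 then tnth p.2 ord0
  else tnth p.1 (Snode 1) + tnth p.2 ord_max - 2 * tnth p.1 (Snode 1) * tnth p.2 ord_max.
Definition endo_ex (i : 'I_2) : {set 'I_2} :=
  if i == Snode 1 then finset.set0 else [set Snode 1]%SET.
Definition exo_ex (i : 'I_2) : {set 'I_2} :=
  if i == Snode 1 then [set ord0]%SET else [set ord_max]%SET.

Lemma Gex_meas i : measurable_fun [set: 2.-tuple R * 2.-tuple R] (Gex i).
Proof.
rewrite /Gex; case: (i == Snode 1).
  exact: measurableT_comp (measurable_tnth _) measurable_snd.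
have m1 : measurable_fun [set: 2.-tuple R * 2.-tuple R] (fun p => tnth p.1 (Snode 1)).
  exact: measurableT_comp (measurable_tnth _) measurable_fst.
have m2 : measurable_fun [set: 2.-tuple R * 2.-tuple R] (fun p => tnth p.2 ord_max).
  exact: measurableT_comp (measurable_tnth _) measurable_snd.
apply: measurable_funB; first exact: measurable_funD.
apply: measurable_funM => //; apply: measurable_funM => //.
Qed.

Lemma Gex_local i (v v' : 2.-tuple R) (u u' : 2.-tuple R) :
    (forall k, k \in endo_ex i -> tnth v k = tnth v' k) ->
    (forall j, j \in exo_ex i -> tnth u j = tnth u' j) ->
    Gex i (v, u) = Gex i (v', u').
Proof.
rewrite /Gex /endo_ex /exo_ex /=; case: (i == Snode 1) => hv hu.
  by rewrite hu // inE.
by rewrite hv ?inE // hu ?inE.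
Qed.

Definition Mex : SCM R 1 2 := Build_SCM Gex_meas Gex_local.

Lemma connect_inv (T : finType) (e : rel T) (a : pred T) x y :
  (forall u v, e u v -> a u -> a v) -> connect e x y -> a x -> a y.
Proof.
move=> cl /connectP[p]; elim: p x => [|z p IH] x /=; first by move=> _ ->.
by move=> /andP[exz pz] ly ax; apply: (IH z pz ly (cl _ _ exz ax)).
Qed.

Lemma Mex_acyclic : acyclic Mex.
Proof.
move=> k l ekl; apply/negP => clk.
case: l ekl clk => [l|l] //= ekl clk.
have [lS|lX] := eqVneq l (Snode 1).
  have H := @connect_inv _ _ (fun v : 'I_2 + 'I_2 => if v is inl _ then true else false) _ _
    (fun u v => match v with inl _ => fun _ _ => isT | inr _ => fun f _ => f end) clk isT.
  by case: k ekl {clk} H => // k; rewrite lS /= /endo_ex eqxx inE.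
have Hl : forall v, causal_edge Mex (inl l) v = false.
  move=> [v|v] //=; rewrite /endo_ex; case: (v == Snode 1); rewrite ?inE //.
  by rewrite (negbTE lX).
have cl : forall u v, causal_edge Mex u v -> (fun v => v == inl l) u -> (fun v => v == inl l) v.
  by move=> u v euv /eqP eu; move: euv; rewrite eu Hl.
have /eqP kl := @connect_inv _ _ (fun v => v == inl l) _ _ cl clk (eqxx _).
by move: ekl; rewrite kl -/(causal_edge Mex (inl l) (inl l)) Hl.
Qed.

Local Open Scope ereal_scope.
Definition Pex : probability (bool * bool)%type R :=
  (bernoulli_prob (1/2 : R) \x bernoulli_prob (1/2 : R))%E.

Lemma Pex_prod X : Pex X = (bernoulli_prob (1/2 : R) \x bernoulli_prob (1/2 : R))%E X.
Proof. by []. Qed.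

Lemma half01 : (0 <= (1/2 : R) <= 1)%R.
Proof. by apply/andP; split; rewrite ?divr_ge0 // ler_pdivrMr // mul1r ler1n. Qed.

Lemma Pb_E (B : set bool) : bernoulli_prob (1/2 : R) B =
  (((true \in B)%:R + (false \in B)%:R) / 2)%:E.
Proof.
rewrite bernoulli_probE ?half01 // !diracE -!EFinM -EFinD; congr EFin.
by rewrite /unstable.onem; field.
Qed.

Lemma allmeas (A : set (bool * bool)) : measurable A.
Proof.
have -> : A = ([set true] `*` [set b | A (true, b)]) `|` ([set false] `*` [set b | A (false, b)]).
  apply/seteqP; split => [[a b] Aab|[a b] [[/= -> //]|[/= -> //]]].
  by case: a Aab => Aab; [left|right].
by apply: measurableU; apply: measurableX.
Qed.

Lemma P_E (A : set (bool * bool)) : (bernoulli_prob (1/2 : R) \x bernoulli_prob (1/2 : R))%E A =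
  ((((true, true) \in A)%:R + ((true, false) \in A)%:R
   + ((false, true) \in A)%:R + ((false, false) \in A)%:R) / 4)%:E.
Proof.
have AE : A = ([set true] `*` [set b | A (true, b)]) `|` ([set false] `*` [set b | A (false, b)]).
  apply/seteqP; split => [[a b] Aab|[a b] [[/= -> //]|[/= -> //]]].
  by case: a Aab => Aab; [left|right].
rewrite {1}AE measureU //; last by apply/seteqP; split => // [[a b]] /= [[-> _] [+ _]].
rewrite [X in (X + _)%E]product_measure1E // [X in (_ + X)%E]product_measure1E //.
rewrite [X in (X * _ + _)%E]Pb_E [X in (_ * X + _)%E]Pb_E [X in (_ + X * _)%E]Pb_E [X in (_ + _ * X)%E]Pb_E -!EFinM -EFinD; congr EFin.
rewrite !in_set1 /=.
have mE : forall a b, (b \in [set b | A (a, b)]) = ((a, b) \in A).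
  by move=> a b; apply/idP/idP; rewrite !in_setE.
  by rewrite !mE; field.
all: exact: measurableX.
Qed.

Local Close Scope ereal_scope.
Definition xr (a b : bool) : R := a%:R + b%:R - 2 * a%:R * b%:R.
Lemma xrE a b : xr a b = (a (+) b)%:R.
Proof. by case: a; case: b; rewrite /xr /=; ring. Qed.

Definition Uex (w : bool * bool) : 2.-tuple R := [tuple (w.1 : nat)%:R; (w.2 : nat)%:R].
Definition Vex (w : bool * bool) : 2.-tuple R := [tuple xr w.1 w.2; (w.1 : nat)%:R].
Definition Vintex (s : R) (w : bool * bool) : 2.-tuple R :=
  [tuple s + (w.2 : nat)%:R - 2 * s * (w.2 : nat)%:R; s].
Definition hex (p : 1.-tuple R * R) : R := tnth p.1 ord0.
Definition Sex : seq R := [:: 0; 1].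

Lemma tn0 (a b : R) : tnth [tuple a; b] ord0 = a. Proof. by []. Qed.
Lemma tn1 (a b : R) : tnth [tuple a; b] ord_max = b. Proof. by []. Qed.
Lemma tnS (a b : R) : tnth [tuple a; b] (Snode 1) = b. Proof. by []. Qed.
Lemma tnX (a b : R) (i : 'I_1) : tnth [tuple a; b] (Xnode i) = a.
Proof. by rewrite (ord1 i). Qed.

Lemma measf d' (T : measurableType d') (f : bool * bool -> T) : measurable_fun [set: bool * bool] f.
Proof. by move=> _ Y mY; exact: allmeas. Qed.

Lemma ord2P (i : 'I_2) : i = Snode 1 \/ i = Xnode ord0.
Proof. case: i => [[|[|n]] Hi]; [right|left|by []]; exact: val_inj. Qed.

Lemma PexE (A : set (bool * bool)) : Pex A =
  ((((true, true) \in A)%:R + ((true, false) \in A)%:R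
   + ((false, true) \in A)%:R + ((false, false) \in A)%:R) / 4)%:E.
Proof. exact: P_E. Qed.

Lemma memeq T (f : T -> R) s x : (x \in [set w | f w = s]) = (f x == s).
Proof. by apply/idP/eqP; rewrite in_setE. Qed.

Lemma ex_solves : solves Pex Mex Uex Vex.
Proof.
apply: aeW => w i; case: (ord2P i) => ->.
  by rewrite tnS /= /Gex /= tn0.
by rewrite tnX /= /Gex /= tnS tn1 /xr.
Qed.

Lemma e01 : ((0:R) == 1) = false. Proof. by rewrite eq_sym oner_eq0. Qed.

Lemma ex_setting : setting Pex Mex Uex Vex Sex.
Proof.
split.
- exact: measf.
- split; [exact: measf|exact: ex_solves|].
  move=> V' _ hV'; apply: filterS hV' => w Hw.
  have hS := Hw (Snode 1); have hX := Hw (Xnode ord0).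
  move: hS; rewrite /= /Gex /= tn0 => hS.
  move: hX; rewrite /= /Gex /= hS tn1 => hX.
  apply: eq_from_tnth => i; case: (ord2P i) => ->.
    by rewrite tnS hS.
  by rewrite tnX hX.
- by move=> w; rewrite /Sof /= tnS /Sex; case: w.1; rewrite !in_cons eqxx ?orbT.
- move=> s; rewrite /Sex !in_cons orbF => /orP[] /eqP ->; rewrite PexE !memeq /Sof /= !tnS /=.
  all: by rewrite ?eqxx ?e01 ?oner_eq0 lte_fin /=; lra.
Qed.

Lemma mempre T (f : T -> R) (B : set R) x : (x \in f @^-1` B) = (f x \in B).
Proof. by apply/idP/idP; rewrite !in_setE. Qed.

Lemma memp {U : Type} (f : (bool * bool)%type -> U) (B : set U) x : (x \in f @^-1` B) = (f x \in B).
Proof. by apply/idP/idP; rewrite !in_setE. Qed.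

Lemma ex_RE : RE Pex Mex Uex.
Proof.
split; last by move=> i; rewrite /= /endo_ex eqxx finset.in_set0.
have E1 : Ucoords Uex [set j | j \in exo_par Mex (Snode 1)] = [set fun w => tnth (Uex w) ord0].
  apply/seteqP; split => f /=.
    by case=> j /=; rewrite /exo_ex eqxx finset.in_set1 => /eqP -> ->.
  by move=> ->; exists ord0 => //; rewrite /= /exo_ex eqxx finset.in_set1.
have E2 : Ucoords Uex [set j | exists i : 'I_1, j \in exo_par Mex (Xnode i)] =
    [set fun w => tnth (Uex w) ord_max].
  apply/seteqP; split => f /=.
    by case=> j /= [i]; rewrite (ord1 i) /exo_ex /= finset.in_set1 => /eqP -> ->.
  by move=> ->; exists ord_max => //; exists ord0; rewrite /= /exo_ex /= finset.in_set1.
rewrite E1 E2; apply: indep_single => B C _ _.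
rewrite !PexE !in_setI !memp /Uex /= !tn0 !tn1 -EFinM; congr EFin.
by do 2 case: (_ \in B); do 2 case: (_ \in C); rewrite /=; field.
Qed.

Lemma ex_SP : statistical_parity Pex Vex hex.
Proof.
apply: indep_single => B C _ _.
rewrite !PexE !in_setI !memp /hex /Xof /Sof /= !tnth_mktuple !tnX !tnS !xrE /= -EFinM; congr EFin.
by do 2 case: (_ \in B); do 2 case: (_ \in C); rewrite /=; field.
Qed.

Lemma ex_notCF : ~ counterfactually_fair Pex Vex Vintex Sex hex.
Proof.
move=> /(_ 0 1) []; rewrite ?in_cons ?eqxx ?orbT // => K [K' [H1 H2 Hae]].
case: Hae => N [mN N0 HN].
have PE0 : Pex [set w | Sof Vex w = 0] = (2 / 4)%:E.
  by rewrite PexE !memeq /Sof /= !tnS /= ?eqxx ?oner_eq0 /=; congr EFin; field.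
move: N0; rewrite /cond_X_law PE0 /= PexE !in_setI !memp !memeq /Sof /= !tnS /= ?eqxx ?oner_eq0 /=.
rewrite -EFinM => -[].
have h24 : (2 / 4 : R)^-1 = 2 by field.
rewrite h24 => H0.
have : (Xof Vex (false, true) \in N) = false /\ (Xof Vex (false, false) \in N) = false.
  by move: H0; case: (_ \in N); case: (_ \in N) => //= H0; exfalso; move: H0; lra.
move=> {H0} [n1 n0].
pose A := ~` N `&` [set x : 1.-tuple R | tnth x ord0 = 1].
have mA : measurable A.
  apply: measurableI; first exact: measurableC.
  by have := @measurable_tnth _ _ 1 ord0 measurableT [set (1:R)] (measurable_set1 1); rewrite setTI.
have e1 := H1 A [set 1] mA (measurable_set1 1).
have e2 := H2 A [set 1] mA (measurable_set1 1).
have eqI : (\int[Pex]_(w in [set w | Sof Vex w = 0%R] `&` Xof Vex @^-1` A) K (Xof Vex w) [set 1%R] =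
    \int[Pex]_(w in [set w | Sof Vex w = 0%R] `&` Xof Vex @^-1` A) K' (Xof Vex w) [set 1%R])%E.
  apply: eq_integral => w; rewrite in_setE => -[_ [/= nN _]].
  case: (pselect (forall B : set R, measurable B -> K (Xof Vex w) B = K' (Xof Vex w) B)) => [h|h].
    exact: h _ (measurable_set1 _).
  by exfalso; apply: nN; apply: HN.
move: e1 e2; rewrite eqI => e1 e2; move: (etrans e1 (esym e2)) => {e1 e2 eqI}.
rewrite /A !PexE !in_setI !memp !in_set1 !in_setC !memeq /Sof /= !tnS /= ?eqxx ?oner_eq0 /= n1 n0 /=.
rewrite /Yhat_do /hex /Xof !tnth_mktuple !tnX !xrE /=.
rewrite (_ : 1 + 1 - 2 * 1 * 1 == 1 = false); last by rewrite (_ : 1 + 1 - 2 * 1 * 1 = 0 :> R) ?e01 //; ring.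
rewrite !eqxx e01 /= => -[]; lra.
Qed.

Lemma ex_int s : s \in Sex -> intervened_solution Pex Mex Uex s (Vintex s).
Proof.
move=> _; split; first exact: measf.
apply: aeW => w; split; first by rewrite tnS.
by move=> i; rewrite (ord1 i) tnX /= /Gex /= tnS tn1.
Qed.

Lemma ex_hmeas : measurable_fun [set: 1.-tuple R * R] hex.
Proof. exact: measurableT_comp (measurable_tnth _) measurable_fst. Qed.

Lemma part2 : exists (d m : nat) (dO : measure_display) (O : measurableType dO)
       (P : probability O R) (M : SCM R d m) (U : O -> m.-tuple R)
       (V : O -> (d.+1).-tuple R) (Vint : R -> O -> (d.+1).-tuple R)
       (Sset : seq R) (h : d.-tuple R * R -> R),
       [/\ acyclic M, RE P M U, setting P M U V Sset,
           (forall s, s \in Sset -> intervened_solution P M U s (Vint s)) &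
           measurable_fun [set: d.-tuple R * R] h] /\
       statistical_parity P V h /\
       ~ counterfactually_fair P V Vint Sset h.
Proof.
exists 1%N, 2%N, _, _, Pex, Mex, Uex, Vex, Vintex, Sex, hex.
split; first split.
- exact: Mex_acyclic.
- exact: ex_RE.
- exact: ex_setting.
- exact: ex_int.
- exact: ex_hmeas.
split; [exact: ex_SP | exact: ex_notCF].
Qed.
End Ex.

Theorem proposition6 :
  (forall (R : realType) (d m : nat) (dO : measure_display) (O : measurableType dO)
     (P : probability O R) (M : SCM R d m) (U : O -> m.-tuple R)
     (V : O -> (d.+1).-tuple R) (Vint : R -> O -> (d.+1).-tuple R)
     (Sset : seq R) (h : d.-tuple R * R -> R),
     acyclic M -> RE P M U -> setting P M U V Sset ->
     (forall s, s \in Sset -> intervened_solution P M U s (Vint s)) ->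
     measurable_fun [set: d.-tuple R * R] h ->
     counterfactually_fair P V Vint Sset h ->
     statistical_parity P V h)
  /\
  (forall R : realType,
     exists (d m : nat) (dO : measure_display) (O : measurableType dO)
       (P : probability O R) (M : SCM R d m) (U : O -> m.-tuple R)
       (V : O -> (d.+1).-tuple R) (Vint : R -> O -> (d.+1).-tuple R)
       (Sset : seq R) (h : d.-tuple R * R -> R),
       [/\ acyclic M, RE P M U, setting P M U V Sset,
           (forall s, s \in Sset -> intervened_solution P M U s (Vint s)) &
           measurable_fun [set: d.-tuple R * R] h] /\
       statistical_parity P V h /\
       ~ counterfactually_fair P V Vint Sset h).
Proof.
split.
  move=> R d m dO O P M U V Vint Sset h ac [hREi hREe] [mU [mV solV _] inS posS] hint mh hCF.
  by apply: (@SP_main R d m dO O P M U V Vint Sset h).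
move=> R; exact: part2.
Qed.
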